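(* Let $n\ge 1$, $k\ge 1$ be integers, let $\lambda\in\mathbb{F}_{2^n}^*$, and let $f:\mathbb{F}_{2^n}\to\mathbb{F}_2$ be given by $f(x)=Tr(\lambda x^{2^k+1})$. Then $f$ is negabent if and only if the polynomial $P(x)=\lambda^{2^{n-k}}x^{2^{n-k}}+\lambda x^{2^k}+x$ is a permutation polynomial of $\mathbb{F}_{2^n}$.
   Context: $Tr=Tr_1^n:\mathbb{F}_{2^n}\to\mathbb{F}_2$ is the absolute trace, $Tr(x)=x+x^2+\dots+x^{2^{n-1}}$. Fix a self-dual basis $\{\alpha_1,\dots,\alpha_n\}$ of $\mathbb{F}_{2^n}$ over $\mathbb{F}_2$ (i.e. $Tr(\alpha_i\alpha_j)=\delta_{ij}$) and identify $x=\sum x_i\alpha_i$ with $(x_1,\dots,x_n)\in\mathbb{F}_2^n$; let $wt(x)$ be the number of nonzero coordinates $x_i$. For $f:\mathbb{F}_{2^n}\to\mathbb{F}_2$ the nega-Hadamard transform is $\mathcal{N}_f(\mu)=2^{-n/2}\sum_{x}(-1)^{f(x)+Tr(\mu x)}\,\mathrm{i}^{wt(x)}$ with $\mathrm{i}=\sqrt{-1}$, and $f$ is negabent if $|\mathcal{N}_f(\mu)|=1$ for all $\mu\in\mathbb{F}_{2^n}$. *)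

(* Defs.v *)
From HB Require Import structures.
From mathcomp Require Import all_boot all_order all_algebra all_field.
Set Implicit Arguments. Unset Strict Implicit. Unset Printing Implicit Defensive.
Import Order.TTheory GRing.Theory Num.Theory.
Local Open Scope ring_scope.

(* Absolute trace Tr_1^n : F_{2^n} -> F_2, valued in the prime subfield of F. *)
Definition Tr (F : finFieldType) (n : nat) (x : F) : F :=
  \sum_(i < n) x ^+ (2 ^ i).

Definition self_dual (F : finFieldType) (n : nat) (a : 'I_n -> F) : Prop :=
  forall i j : 'I_n, Tr n (a i * a j) = (i == j)%:R.

Definition elt_of (F : finFieldType) (n : nat) (a : 'I_n -> F)
  (c : {ffun 'I_n -> bool}) : F := \sum_(i < n) (c i)%:R * a i.

Definition wt (n : nat) (c : {ffun 'I_n -> bool}) : nat := #|[set i | c i]|.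

Definition sgn (F : finFieldType) (y : F) : algC := if y == 0 then 1 else -1.

(* Nega-Hadamard transform, summing over x identified with (x_1..x_n). *)
Definition negaH (F : finFieldType) (n : nat) (a : 'I_n -> F) (f : F -> F)
  (mu : F) : algC :=
  (sqrtC (2 ^+ n))^-1 *
  \sum_(c : {ffun 'I_n -> bool})
     sgn (f (elt_of a c) + Tr n (mu * elt_of a c)) * 'i ^+ (wt c).

Definition negabent (F : finFieldType) (n : nat) (a : 'I_n -> F) (f : F -> F)
  : Prop := forall mu : F, `|negaH a f mu| = 1.

Definition perm_poly (F : finFieldType) (p : {poly F}) : Prop :=
  bijective (fun x : F => p.[x]).

(* Main.v *)
Require Import Defs.
From HB Require Import structures.
From mathcomp Require Import all_boot all_order all_algebra all_field.
From mathcomp Require Import ring zify.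
Import Order.TTheory GRing.Theory Num.Theory.
Local Open Scope ring_scope.

Set Implicit Arguments. Unset Strict Implicit. Unset Printing Implicit Defensive.

Lemma two0 (F : finFieldType) n : #|F| = (2 ^ n)%N -> (1 + 1 : F) = 0.
Proof.
move=> hF; have := pcharf0 (card_finPcharP hF (isT : prime 2)).
by rewrite -[2%N]/(1 + 1)%N natrD.
Qed.

Lemma addxx (F : finFieldType) (t : (1 + 1 : F) = 0) (x : F) : x + x = 0.
Proof. by rewrite -[x in x + _]mulr1 -{2}[x]mulr1 -mulrDr t mulr0. Qed.

Lemma oppx (F : finFieldType) (t : (1 + 1 : F) = 0) (x : F) : - x = x.
Proof. by apply/eqP; rewrite eq_sym -subr_eq0 opprK addxx. Qed.

Lemma frobD (F : finFieldType) (t : (1 + 1 : F) = 0) j (x y : F) :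
  (x + y) ^+ (2 ^ j) = x ^+ (2 ^ j) + y ^+ (2 ^ j).
Proof.
elim: j => [|j IH]; first by rewrite !expr1.
rewrite expnSr !exprM IH.
have -> : forall u v : F, (u + v) ^+ 2 = u ^+ 2 + v ^+ 2 + (1 + 1) * (u * v) by move=> u v; ring.
by rewrite t mul0r addr0.
Qed.

Lemma frobM (F : finFieldType) j (x y : F) :
  (x * y) ^+ (2 ^ j) = x ^+ (2 ^ j) * y ^+ (2 ^ j).
Proof. by rewrite exprMn. Qed.

Lemma expcard (F : finFieldType) n (hF : #|F| = (2 ^ n)%N) j (x : F) :
  x ^+ ((2 ^ n) ^ j) = x.
Proof.
elim: j => [|j IH]; first by rewrite expr1.
by rewrite expnSr exprM IH -hF expf_card.
Qed.

Lemma expcard1 (F : finFieldType) n (hF : #|F| = (2 ^ n)%N) (x : F) :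
  x ^+ (2 ^ n) = x.
Proof. by rewrite -hF expf_card. Qed.

Lemma Tr0 (F : finFieldType) n : Tr n (0 : F) = 0.
Proof. by rewrite /Tr big1 // => i _; rewrite expr0n expn_eq0. Qed.

Lemma TrD (F : finFieldType) n (t : (1 + 1 : F) = 0) (x y : F) :
  Tr n (x + y) = Tr n x + Tr n y.
Proof. by rewrite /Tr -big_split /=; apply: eq_bigr => i _; rewrite frobD. Qed.

Lemma Tr_sum (F : finFieldType) n (t : (1 + 1 : F) = 0) (I : finType) (P : pred I) (g : I -> F) :
  Tr n (\sum_(i | P i) g i) = \sum_(i | P i) Tr n (g i).
Proof. exact: (big_morph (Tr n) (TrD n t) (Tr0 F n)). Qed.

Lemma Tr_sq (F : finFieldType) n (hF : #|F| = (2 ^ n)%N) (x : F) :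
  Tr n (x ^+ 2) = Tr n x.
Proof.
case: n hF => [|n] hF; first by rewrite /Tr !big_ord0.
rewrite /Tr [LHS]big_ord_recr [RHS]big_ord_recl /=.
rewrite -exprM -expnS expcard1 // expn0 expr1 addrC.
congr (_ + _); apply: eq_bigr => i _.
by rewrite -exprM /bump /= add1n -expnS.
Qed.

Lemma Tr_frob (F : finFieldType) n (hF : #|F| = (2 ^ n)%N) j (x : F) :
  Tr n (x ^+ (2 ^ j)) = Tr n x.
Proof.
elim: j => [|j IH]; first by rewrite expr1.
by rewrite expnSr exprM Tr_sq.
Qed.

Lemma Tr_bit (F : finFieldType) n (hF : #|F| = (2 ^ n)%N) (x : F) :
  Tr n x = 0 \/ Tr n x = 1.
Proof.
have t := two0 hF.
have h : Tr n x ^+ 2 = Tr n x.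
  rewrite -{2}(Tr_sq hF) /Tr.
  rewrite (big_morph (fun y : F => y ^+ 2) (fun u v => frobD t 1 u v) (expr0n _ 2)).
  by apply: eq_bigr => i _; rewrite -!exprM mulnC.
have : Tr n x * (Tr n x - 1) == 0 by rewrite mulrBr mulr1 -expr2 h subrr.
by rewrite mulf_eq0 subr_eq0 => /orP [/eqP ->|/eqP ->]; [left|right].
Qed.

Definition phi (F : finFieldType) n (y : F) : algC := sgn (Tr n y).

Lemma sgn0 (F : finFieldType) : sgn (0 : F) = 1.
Proof. by rewrite /sgn eqxx. Qed.
Lemma sgn1 (F : finFieldType) : sgn (1 : F) = -1.
Proof. by rewrite /sgn oner_eq0. Qed.

Lemma phiD (F : finFieldType) n (hF : #|F| = (2 ^ n)%N) (x y : F) :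
  phi n (x + y) = phi n x * phi n y.
Proof.
have t := two0 hF.
rewrite /phi (TrD n t).
by case: (Tr_bit hF x) => ->; case: (Tr_bit hF y) => ->;
  rewrite ?addr0 ?add0r ?t ?sgn0 ?sgn1 ?mulr1 ?mul1r ?mulrNN ?mulr1.
Qed.

Lemma phi0 (F : finFieldType) n : phi n (0 : F) = 1.
Proof. by rewrite /phi Tr0 sgn0. Qed.

Lemma phi_pm (F : finFieldType) n (hF : #|F| = (2 ^ n)%N) (x : F) :
  phi n x = 1 \/ phi n x = -1.
Proof. by rewrite /phi; case: (Tr_bit hF x) => ->; rewrite ?sgn0 ?sgn1; [left|right]. Qed.

Lemma phi_sq (F : finFieldType) n (hF : #|F| = (2 ^ n)%N) (x : F) :
  phi n x * phi n x = 1.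
Proof. by case: (phi_pm hF x) => ->; rewrite ?mulr1 ?mulrNN ?mulr1. Qed.

Lemma phi_neq0 (F : finFieldType) n (hF : #|F| = (2 ^ n)%N) (x : F) :
  phi n x != 0.
Proof. by case: (phi_pm hF x) => ->; rewrite ?oppr_eq0 oner_eq0. Qed.

Lemma phi_conj (F : finFieldType) n (hF : #|F| = (2 ^ n)%N) (x : F) :
  (phi n x)^* = phi n x.
Proof. by case: (phi_pm hF x) => ->; rewrite ?rmorphN rmorph1. Qed.

Lemma phi_sum (F : finFieldType) n (hF : #|F| = (2 ^ n)%N) (I : finType) (P : pred I) (g : I -> F) :
  phi n (\sum_(i | P i) g i) = \prod_(i | P i) phi n (g i).
Proof. exact: (big_morph (phi n) (phiD hF) (phi0 F n)). Qed.

Lemma char_sum (F : finFieldType) n (hF : #|F| = (2 ^ n)%N) (x0 : F) (h0 : Tr n x0 = 1) (w : F) :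
  \sum_(x : F) phi n (x * w) = if w == 0 then (2 ^ n)%:R else 0.
Proof.
case: eqP => [->|/eqP wn0].
  under eq_bigr => x _ do rewrite mulr0 phi0.
  by rewrite sumr_const cardT -cardE hF.
set S := \sum_(x : F) _.
have hS : S = - S.
  rewrite {1}/S (reindex_inj (addIr (x0 / w))) /=.
  rewrite /S -sumrN; apply: eq_bigr => x _.
  rewrite mulrDl (phiD hF) divfK // /phi h0 sgn1 mulrN1 //.
have : S * 2 == 0.
  by rewrite mulrDr mulr1 {1}hS addNr.
by rewrite mulf_eq0 pnatr_eq0 orbF => /eqP.
Qed.

Definition xorf n (c e : {ffun 'I_n -> bool}) : {ffun 'I_n -> bool} :=
  [ffun i => c i (+) e i].

Lemma xorfK n (c : {ffun 'I_n -> bool}) : involutive (xorf c).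
Proof. by move=> e; apply/ffunP => i; rewrite !ffunE addKb. Qed.

Lemma xorf_inj n (c : {ffun 'I_n -> bool}) : injective (xorf c).
Proof. exact: inv_inj (xorfK c). Qed.

Lemma xorfxx n (c : {ffun 'I_n -> bool}) : xorf c c = [ffun => false].
Proof. by apply/ffunP => i; rewrite !ffunE addbb. Qed.

Lemma natb_xor (F : finFieldType) (t : (1 + 1 : F) = 0) (b1 b2 : bool) :
  ((b1 (+) b2)%:R : F) = b1%:R + b2%:R.
Proof. by case: b1; case: b2; rewrite /= ?addr0 ?add0r ?t. Qed.

Lemma E_xor (F : finFieldType) (t : (1 + 1 : F) = 0) n (a : 'I_n -> F) c e :
  elt_of a (xorf c e) = elt_of a c + elt_of a e.
Proof.
rewrite /elt_of -big_split /=; apply: eq_bigr => i _.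
by rewrite ffunE natb_xor // mulrDl.
Qed.

Lemma E0 (F : finFieldType) n (a : 'I_n -> F) : elt_of a [ffun => false] = 0.
Proof. by rewrite /elt_of big1 // => i _; rewrite ffunE mul0r. Qed.

Lemma Tr_natb (F : finFieldType) n (b : bool) (y : F) :
  Tr n (b%:R * y) = b%:R * Tr n y.
Proof. by case: b; rewrite ?mul1r ?mul0r ?Tr0. Qed.

Lemma TrE (F : finFieldType) n (hF : #|F| = (2 ^ n)%N) (a : 'I_n -> F)
  (sd : self_dual a) j c : Tr n (a j * elt_of a c) = (c j)%:R.
Proof.
have t := two0 hF.
rewrite /elt_of mulr_sumr (Tr_sum n t).
rewrite (bigD1 j) //= big1 ?addr0.
  by rewrite mulrCA Tr_natb sd eqxx mulr1.
by move=> i ij; rewrite mulrCA Tr_natb sd eq_sym (negbTE ij) mulr0.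
Qed.

Lemma E_inj (F : finFieldType) n (hF : #|F| = (2 ^ n)%N) (a : 'I_n -> F)
  (sd : self_dual a) : injective (elt_of a).
Proof.
move=> c d h; apply/ffunP => j.
have := TrE hF sd j c; rewrite h TrE //.
by case: (c j); case: (d j) => //= /eqP; rewrite ?oner_eq0 // eq_sym oner_eq0.
Qed.

Lemma E_bij (F : finFieldType) n (hF : #|F| = (2 ^ n)%N) (a : 'I_n -> F)
  (sd : self_dual a) : bijective (elt_of a).
Proof.
apply: inj_card_bij (E_inj hF sd) _.
by rewrite card_ffun card_bool card_ord hF.
Qed.

Lemma sum_E (F : finFieldType) n (hF : #|F| = (2 ^ n)%N) (a : 'I_n -> F)
  (sd : self_dual a) (G : F -> algC) :
  \sum_(x : F) G x = \sum_(c : {ffun 'I_n -> bool}) G (elt_of a c).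
Proof. exact: (reindex _ (onW_bij _ (E_bij hF sd))). Qed.

Lemma phi_cross (F : finFieldType) n (hF : #|F| = (2 ^ n)%N) (a : 'I_n -> F)
  (sd : self_dual a) c e :
  phi n (elt_of a c * elt_of a e) = \prod_j (if c j && e j then -1 else 1).
Proof.
rewrite {1}/elt_of mulr_suml (phi_sum hF); apply: eq_bigr => j _.
rewrite -mulrA /phi Tr_natb TrE //.
by case: (c j); case: (e j); rewrite ?mul1r ?mul0r ?sgn0 ?sgn1.
Qed.

Lemma wt_prod (R : pzSemiRingType) n (c : {ffun 'I_n -> bool}) (x : R) :
  x ^+ wt c = \prod_j (if c j then x else 1).
Proof.
by rewrite -big_mkcond /= prodr_const /wt cardsE.
Qed.

Lemma sign_id n (c e : {ffun 'I_n -> bool}) :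
  'i ^+ (wt c) * (- 'i) ^+ (wt (xorf c e)) =
  (- 'i) ^+ (wt e) * \prod_j (if c j && e j then -1 else 1) :> algC.
Proof.
rewrite !wt_prod -!big_split /=; apply: eq_bigr => j _.
rewrite ffunE; case: (c j); case: (e j) => /=; rewrite ?mulr1 ?mul1r //.
- by rewrite mulrN1 opprK.
- by rewrite mulrN -expr2 sqrCi opprK.
Qed.

Definition Pv (F : finFieldType) n k (lam z : F) : F :=
  lam ^+ (2 ^ (n - k %% n)) * z ^+ (2 ^ (n - k %% n)) + lam * z ^+ (2 ^ k) + z.

Lemma km_eq n k : (0 < n)%N -> (k + (n - k %% n) = n * (k %/ n).+1)%N.
Proof.
move=> n0; have := ltn_pmod k n0; have := divn_eq k n.
lia.
Qed.

Lemma Tr_twist (F : finFieldType) n k (hF : #|F| = (2 ^ n)%N) (n0 : (0 < n)%N)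
  (lam x z : F) :
  Tr n (lam * x ^+ (2 ^ k) * z) =
  Tr n (x * (lam ^+ (2 ^ (n - k %% n)) * z ^+ (2 ^ (n - k %% n)))).
Proof.
rewrite -(Tr_frob hF (n - k %% n)) !exprMn -exprM -expnD km_eq // expnM.
by rewrite expcard // mulrCA mulrA.
Qed.

Lemma key (F : finFieldType) n k (hF : #|F| = (2 ^ n)%N) (n0 : (0 < n)%N)
  (lam mu x z : F) :
  Tr n (lam * x ^+ (2 ^ k + 1) + mu * x + (lam * (x + z) ^+ (2 ^ k + 1) + mu * (x + z))
        + x * z) =
  Tr n (x * Pv n k lam z + (lam * z ^+ (2 ^ k + 1) + mu * z)).
Proof.
have t := two0 hF.
rewrite !exprD !expr1 (frobD t) /Pv.
set u := x ^+ (2 ^ k); set v := z ^+ (2 ^ k).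
set L := lam ^+ _; set M := z ^+ _.
have -> : lam * (u * x) + mu * x + (lam * ((u + v) * (x + z)) + mu * (x + z)) + x * z =
  (x * (L * M + lam * v + z) + (lam * (v * z) + mu * z)) + (lam * u * z + x * (L * M))
  + (1 + 1) * (lam * (u * x) + mu * x - x * (L * M)) by ring.
rewrite t mul0r addr0 !(TrD n t) Tr_twist // -/u -/L -/M.
by rewrite -addrA addxx // addr0.
Qed.

Definition Tsum (F : finFieldType) n k (a : 'I_n -> F) (lam mu : F) : algC :=
  \sum_(e : {ffun 'I_n -> bool})
    (if Pv n k lam (elt_of a e) == 0 then
       (- 'i) ^+ (wt e) * phi n (lam * elt_of a e ^+ (2 ^ k + 1) + mu * elt_of a e)
     else 0).

Lemma keyphi (F : finFieldType) n k (hF : #|F| = (2 ^ n)%N) (n0 : (0 < n)%N)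
  (lam mu x z : F) :
  phi n (lam * x ^+ (2 ^ k + 1) + mu * x + (lam * (x + z) ^+ (2 ^ k + 1) + mu * (x + z))
        + x * z) =
  phi n (x * Pv n k lam z + (lam * z ^+ (2 ^ k + 1) + mu * z)).
Proof. by rewrite /phi key. Qed.

Lemma normS2 (F : finFieldType) n k (hF : #|F| = (2 ^ n)%N) (n0 : (0 < n)%N)
  (a : 'I_n -> F) (sd : self_dual a) (lam mu : F) :
  `| \sum_(c : {ffun 'I_n -> bool})
     sgn (Tr n (lam * elt_of a c ^+ (2 ^ k + 1)) + Tr n (mu * elt_of a c)) * 'i ^+ (wt c) | ^+ 2
  = (2 ^ n)%:R * Tsum k a lam mu.
Proof.
have t := two0 hF.
set E := elt_of a.
set g := fun c => lam * E c ^+ (2 ^ k + 1) + mu * E c.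
have hx : exists x0 : F, Tr n x0 = 1.
  case: n n0 a sd {E g} hF t => // n' _ a sd hF t.
  by exists (a ord0 * a ord0); rewrite sd eqxx.
case: hx => x0 hx0.
under eq_bigr => c _ do rewrite -(TrD n t) -/(phi n _) -/(g c).
rewrite normCK rmorph_sum mulr_suml.
under eq_bigr => c _ do rewrite mulr_sumr (reindex_inj (@xorf_inj _ c)).
rewrite exchange_big /Tsum mulr_sumr; apply: eq_bigr => e _.
transitivity (\sum_(c : {ffun 'I_n -> bool})
   (- 'i) ^+ (wt e) * phi n (g e) * phi n (E c * Pv n k lam (E e))).
  apply: eq_bigr => c _.
  rewrite rmorphM /= phi_conj // rmorphXn /= conjCi.
  rewrite mulrACA sign_id -(phi_cross hF sd) -(phiD hF) mulrCA -(phiD hF).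
  rewrite /g /E E_xor // (keyphi _ hF n0) (phiD hF) -/E -/(g e).
  by rewrite mulrA mulrAC mulrC !mulrA.
rewrite -mulr_sumr -(sum_E hF sd (fun x => phi n (x * _))) (char_sum hF hx0).
by case: eqP => _; rewrite ?mulr0 // mulrC.
Qed.

Lemma PvD (F : finFieldType) n k (t : (1 + 1 : F) = 0) (lam x y : F) :
  Pv n k lam (x + y) = Pv n k lam x + Pv n k lam y.
Proof. rewrite /Pv !(frobD t); ring. Qed.

Lemma Pv0 (F : finFieldType) n k (lam : F) : Pv n k lam 0 = 0.
Proof. by rewrite /Pv !expr0n !expn_eq0 /= !mulr0 !addr0. Qed.

Lemma T_triv (F : finFieldType) n k (hF : #|F| = (2 ^ n)%N)
  (a : 'I_n -> F) (sd : self_dual a) (lam mu : F) :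
  (forall z, Pv n k lam z = 0 -> z = 0) -> Tsum k a lam mu = 1.
Proof.
move=> hk; rewrite /Tsum (bigD1 [ffun => false]) //= E0 Pv0 eqxx.
rewrite big1 ?addr0.
  rewrite wt_prod big1 ?mul1r; last by move=> j _; rewrite ffunE.
  by rewrite addn1 exprS !mul0r !mulr0 addr0 phi0.
move=> e ne; case: eqP => // /hk he; exfalso; move/negP: ne; apply.
by apply/eqP; apply: (E_inj hF sd); rewrite he E0.
Qed.

Lemma T_nontriv (F : finFieldType) n k (hF : #|F| = (2 ^ n)%N) (n0 : (0 < n)%N)
  (a : 'I_n -> F) (sd : self_dual a) (lam : F) :
  (forall mu, Tsum k a lam mu = 1) -> forall z, Pv n k lam z = 0 -> z = 0.
Proof.
move=> hT z0 hz0; apply/eqP; apply/negPn/negP => z0n0.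
have t := two0 hF.
have hx : exists x0 : F, Tr n x0 = 1.
  case: n n0 a sd hF t {hT hz0} => // n' _ a sd hF t.
  by exists (a ord0 * a ord0); rewrite sd eqxx.
case: hx => x0 hx0.
have [Einv EK KE] := E_bij hF sd.
set e0 := Einv z0; have he0 : elt_of a e0 = z0 by rewrite /e0 KE.
have h1 : \sum_(mu : F) Tsum k a lam mu * phi n (mu * z0) = 0.
  under eq_bigr => mu _ do rewrite hT mul1r.
  by rewrite (char_sum hF hx0) (negbTE z0n0).
move: h1; rewrite /Tsum.
under eq_bigr => mu _ do rewrite mulr_suml.
rewrite exchange_big /=.
have hterm : forall e, \sum_(mu : F)
   (if Pv n k lam (elt_of a e) == 0 then
       (- 'i) ^+ (wt e) * phi n (lam * elt_of a e ^+ (2 ^ k + 1) + mu * elt_of a e)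
     else 0) * phi n (mu * z0) =
   if Pv n k lam (elt_of a e) == 0 then
        (- 'i) ^+ wt e * phi n (lam * elt_of a e ^+ (2 ^ k + 1)) *
        (if elt_of a e + z0 == 0 then (2 ^ n)%:R else 0) else 0.
  move=> e; case: eqP => _; last by rewrite big1 // => mu _; rewrite mul0r.
  rewrite -(char_sum hF hx0) mulr_sumr; apply: eq_bigr => mu _.
  by rewrite mulrDr !(phiD hF) !mulrA.
under eq_bigr => e _ do rewrite hterm.
rewrite (bigD1 e0) //= big1 ?addr0.
  rewrite he0 hz0 eqxx (addxx t) eqxx => /eqP.
  rewrite !mulf_eq0 expf_eq0 oppr_eq0 (negbTE (neq0Ci _)) andbF /=.
  by rewrite (negbTE (phi_neq0 hF _)) pnatr_eq0 expn_eq0.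
move=> e ne; case: eqP => // _; case: eqP => he; last by rewrite mulr0.
exfalso; move/negP: ne; apply; apply/eqP; apply: (E_inj hF sd).
by rewrite he0; apply/eqP; rewrite -subr_eq0 (oppx t) he.
Qed.
Unset Implicit Arguments.
Theorem proposition3 (n k : nat) (F : finFieldType) (a : 'I_n -> F)
  (lam : F) :
  (1 <= n)%N -> (1 <= k)%N -> #|F| = (2 ^ n)%N -> self_dual a ->
  lam != 0 ->
  negabent a (fun x => Tr n (lam * x ^+ (2 ^ k + 1))) <->
  perm_poly (lam ^+ (2 ^ (n - k %% n)) *: 'X^(2 ^ (n - k %% n))
             + lam *: 'X^(2 ^ k) + 'X).
Proof.
move=> n0 _ hF sd _.
have t := two0 hF.
set P := (_ + _ + _ : {poly F}).
have hP : forall z, P.[z] = Pv n k lam z.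
  by move=> z; rewrite /P !hornerE.
have hN : forall mu, `|negaH a (fun x => Tr n (lam * x ^+ (2 ^ k + 1))) mu| ^+ 2
                     = Tsum k a lam mu.
  move=> mu; rewrite /negaH normrM exprMn normS2 // normfV.
  rewrite ger0_norm ?sqrtC_ge0 ?exprn_ge0 ?ler0n // exprVn sqrtCK.
  by rewrite natrX mulrA mulVf ?mul1r // expf_neq0 // pnatr_eq0.
have hneg : negabent a (fun x => Tr n (lam * x ^+ (2 ^ k + 1))) <->
            forall mu, Tsum k a lam mu = 1.
  split => h mu.
    by rewrite -hN h expr1n.
  by apply/eqP; rewrite -sqrp_eq1 ?normr_ge0 // hN h.
rewrite hneg /perm_poly; split => h.
  apply: injF_bij => x y; rewrite !hP => hxy.
  have : Pv n k lam (x + y) = 0 by rewrite (PvD _ _ t) hxy addxx.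
  move=> h0; have := T_nontriv hF n0 sd h h0.
  by move/eqP; rewrite addr_eq0 (oppx t) => /eqP.
move=> mu; apply: (@T_triv F n k hF a sd lam mu) => z hz.
have /bij_inj hinj := h.
apply: hinj; rewrite /= hP hz.
by rewrite hP Pv0.
Qed.
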